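(* Let $\Pi$ and $\mathcal{R}$ be finite sets of unary and binary relation symbols, and let $\mathcal{H}$ be a class of pointed $(\Pi,\mathcal{R})$-models that is definable by a first-order $(\Pi,\mathcal{R})$-theory. If a $(\Pi,\mathcal{R})$-automaton $A$ converges in $\mathcal{H}$, then $A$ specifies a local algorithm in $\mathcal{H}$.
   Context: A $(\Pi,\mathcal{R})$-model $M$ ($\mathcal{R}=\{R_1,\dots,R_k\}$) consists of a nonempty domain $W$ (possibly infinite) with $P^M\subseteq W$ for $P\in\Pi$ and $R_i^M\subseteq W\times W$; a pointed model is $(M,w)$ with $w\in W$. A class $\mathcal{H}$ of pointed $(\Pi,\mathcal{R})$-models is definable by a first-order theory if there is a (possibly infinite) set $T$ of first-order sentences over the signature $(\Pi,\mathcal{R})$ (with equality) such that for every pointed $(\Pi,\mathcal{R})$-model $(M,w)$: $(M,w)\in\mathcal{H}$ iff $M\models T$. A $(\Pi,\mathcal{R})$-automaton is a tuple $A=(Q,\mathcal{M},\pi,\delta,\mu,F,G)$ with $Q,\mathcal{M}$ nonempty finite or countably infinite sets, $\pi:\mathrm{Pow}(\Pi)\to Q$, $\delta:(\mathrm{Pow}(\mathcal{M}))^k\times Q\to Q$, $\mu:Q\times\mathcal{R}\to\mathcal{M}$, $F\subseteq Q$, $G\subseteq Q\setminus F$. On a model $M$ with domain $W$: $f_0(w)=\pi(\{P\in\Pi:w\in P^M\})$, $f_{n+1}(w)=\delta((N_1,\dots,N_k),f_n(w))$ with $N_i=\{\mu(f_n(v),R_i):(w,v)\in R_i^M\}$.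 $A$ accepts $(M,w)$ in round $n$ if $f_n(w)\in F$ and $f_m(w)\notin G$ for all $m<n$; it rejects $(M,w)$ in round $n$ if $f_n(w)\in G$ and $f_m(w)\notin F$ for all $m<n$. $A$ converges in $\mathcal{H}$ if for every $(M,w)\in\mathcal{H}$ there is some round in which $A$ accepts or rejects $(M,w)$. $A$ specifies a local algorithm in $\mathcal{H}$ if there is $n\in\mathbb{N}$ such that every $(M,w)\in\mathcal{H}$ is accepted or rejected by $A$ in some round $m\le n$. *)

(* Defs.v *)
From mathcomp Require Import all_boot.
Set Implicit Arguments.
Unset Strict Implicit.
Unset Printing Implicit Defensive.

Record model (Pi Rs : finType) := Model {
  dom :> Type;
  dom_inhabited : inhabited dom;
  Pint : Pi -> dom -> Prop;
  Rint : Rs -> dom -> dom -> Prop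
}.

Definition pclass (Pi Rs : finType) := forall M : model Pi Rs, dom M -> Prop.

(* ---------- First-order logic with equality over (Pi,Rs) ----------
   Variables are de Bruijn indices. *)
Inductive formula (Pi Rs : Type) : Type :=
| FFalse
| FEq of nat & nat
| FPred of Pi & nat
| FRel of Rs & nat & nat
| FNot of formula Pi Rs
| FAnd of formula Pi Rs & formula Pi Rs
| FOr of formula Pi Rs & formula Pi Rs
| FImp of formula Pi Rs & formula Pi Rs
| FAll of formula Pi Rs
| FEx of formula Pi Rs.

Arguments FFalse {Pi Rs}.

Definition scons (W : Type) (d : W) (e : nat -> W) : nat -> W :=
  fun n => match n with 0 => d | n'.+1 => e n' end.

Fixpoint sat (Pi Rs : finType) (M : model Pi Rs) (e : nat -> dom M)
    (phi : formula Pi Rs) : Prop :=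
  match phi with
  | FFalse => False
  | FEq i j => e i = e j
  | FPred p i => Pint p (e i)
  | FRel r i j => Rint r (e i) (e j)
  | FNot a => ~ sat e a
  | FAnd a b => sat e a /\ sat e b
  | FOr a b => sat e a \/ sat e b
  | FImp a b => sat e a -> sat e b
  | FAll a => forall d : dom M, sat (scons d e) a
  | FEx a => exists d : dom M, sat (scons d e) a
  end.

Fixpoint closed_at (Pi Rs : Type) (n : nat) (phi : formula Pi Rs) : Prop :=
  match phi with
  | FFalse => True
  | FEq i j => i < n /\ j < n
  | FPred _ i => i < n
  | FRel _ i j => i < n /\ j < n
  | FNot a => closed_at n a
  | FAnd a b | FOr a b | FImp a b => closed_at n a /\ closed_at n b
  | FAll a | FEx a => closed_at n.+1 a
  end.

Definition sentence (Pi Rs : Type) (phi : formula Pi Rs) := closed_at 0 phi.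

(* M |= T : every sentence of T holds in M (under every assignment;
   irrelevant for sentences). *)
Definition models_theory (Pi Rs : finType) (M : model Pi Rs)
    (T : formula Pi Rs -> Prop) : Prop :=
  forall phi, T phi -> forall e : nat -> dom M, sat e phi.

Definition FO_definable (Pi Rs : finType) (H : pclass Pi Rs) : Prop :=
  exists T : formula Pi Rs -> Prop,
    (forall phi, T phi -> sentence phi) /\
    (forall (M : model Pi Rs) (w : dom M), H M w <-> models_theory M T).

(* ---------- (Pi,R)-automata ----------
   Q and Msg are finite or countably infinite (countType); they are
   nonempty automatically since pi and mu produce elements.
   Pow(X) is rendered as X -> Prop. *)
Record automaton (Pi Rs : finType) := Automaton {
  Q : countType;
  Msg : countType;
  pi_ : (Pi -> Prop) -> Q;
  delta : (Rs -> (Msg -> Prop)) -> Q -> Q;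
  mu : Q -> Rs -> Msg;
  Fset : Q -> Prop;
  Gset : Q -> Prop;
  G_disj_F : forall q, Gset q -> ~ Fset q
}.
Arguments pi_ {Pi Rs} a _.
Arguments delta {Pi Rs} a _ _.
Arguments mu {Pi Rs} a _ _.
Arguments Fset {Pi Rs} a _.
Arguments Gset {Pi Rs} a _.
Arguments Q {Pi Rs} a.
Arguments Msg {Pi Rs} a.

Fixpoint run (Pi Rs : finType) (A : automaton Pi Rs) (M : model Pi Rs)
    (n : nat) (w : dom M) : Q A :=
  match n with
  | 0 => pi_ A (fun P => Pint P w)
  | n'.+1 =>
      delta A (fun r => fun m => exists v, Rint r w v /\ mu A (@run Pi Rs A M n' v) r = m)
              (@run Pi Rs A M n' w)
  end.
Arguments run {Pi Rs} A M n w.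

Definition accepts_in {Pi Rs : finType} (A : automaton Pi Rs) (M : model Pi Rs)
    (w : dom M) (n : nat) : Prop :=
  Fset A (run A M n w) /\ forall m, m < n -> ~ Gset A (run A M m w).

Definition rejects_in {Pi Rs : finType} (A : automaton Pi Rs) (M : model Pi Rs)
    (w : dom M) (n : nat) : Prop :=
  Gset A (run A M n w) /\ forall m, m < n -> ~ Fset A (run A M m w).

Arguments accepts_in {Pi Rs} A M w n.
Arguments rejects_in {Pi Rs} A M w n.

Definition converges_in (Pi Rs : finType) (A : automaton Pi Rs) (H : pclass Pi Rs) :=
  forall (M : model Pi Rs) (w : dom M), H M w ->
    exists n, accepts_in A M w n \/ rejects_in A M w n.

Definition local_algorithm_in (Pi Rs : finType) (A : automaton Pi Rs) (H : pclass Pi Rs) :=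
  exists N : nat, forall (M : model Pi Rs) (w : dom M), H M w ->
    exists m, m <= N /\ (accepts_in A M w m \/ rejects_in A M w m).

(* Main.v *)
Require Import Defs.
From mathcomp Require Import all_boot.
From Stdlib Require Import Classical FunctionalExtensionality PropExtensionality ClassicalEpsilon ProofIrrelevance.


Fixpoint subseqs {T : Type} (s : seq T) : seq (seq T) :=
  if s is x :: s' then subseqs s' ++ map (cons x) (subseqs s') else [:: [::]].

Lemma filter_subseqs (T : eqType) (p : pred T) (s : seq T) :
  seq.filter p s \in subseqs s.
Proof.
elim: s => [|x s IH] /=; first by rewrite inE.
rewrite mem_cat; case: (p x); last by rewrite IH.
by rewrite map_f ?orbT.
Qed.

Definition bdec (P : Prop) : bool :=
  if excluded_middle_informative P then true else false.
Lemma bdecP (P : Prop) : bdec P <-> P.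
Proof. by rewrite /bdec; case: excluded_middle_informative. Qed.

Lemma run_finite (Pi Rs : finType) (A : automaton Pi Rs) (m : nat) :
  exists L : seq (Q A), forall (M : model Pi Rs) (w : dom M), run A M m w \in L.
Proof.
elim: m => [|m [L HL]].
  exists [seq pi_ A (fun p => p \in s) | s : {set Pi} <- enum {set Pi}] => M w /=.
  have -> : (fun P => Pint P w) = (fun p => p \in finset (fun p => bdec (Pint p w))).
    apply: functional_extensionality => p; apply: propositional_extensionality.
    by rewrite finset.in_set bdecP.
  by rewrite map_f // mem_enum.
set PL := [seq (r, mu A q r) | r <- enum Rs, q <- L].
exists [seq delta A (fun r msg => (r, msg) \in g) q | g <- subseqs PL, q <- L].
move=> M w /=.
set N := (fun r m0 => exists v, Rint r w v /\ mu A (run A M m v) r = m0).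
set g := seq.filter (fun p => bdec (N p.1 p.2)) PL.
have -> : N = (fun r msg => (r, msg) \in g).
  apply: functional_extensionality => r; apply: functional_extensionality => msg.
  apply: propositional_extensionality; split.
    move=> hN; rewrite mem_filter /=; apply/andP; split; first exact/bdecP.
    case: hN => v [_ <-]; exact: (allpairs_f (fun r q => (r, mu A q r)) (mem_enum _ r) (HL M v)).
  by rewrite mem_filter => /andP [/bdecP].
apply/allpairsP; exists (g, run A M m w); split => //=. exact: filter_subseqs.
Qed.
Set Implicit Arguments.
Section Ultra.
Variables (Pi Rs : finType) (M : nat -> model Pi Rs).
Variable U : (nat -> Prop) -> Prop.
Hypothesis Uup0 : forall A B : nat -> Prop, U A -> (forall n, A n -> B n) -> U B.
Hypothesis UI0 : forall A B : nat -> Prop, U A -> U B -> U (fun n => A n /\ B n).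
Hypothesis U0 : ~ U (fun _ => False).
Hypothesis Uult : forall A : nat -> Prop, U A \/ U (fun n => ~ A n).
Hypothesis Ucof : forall N, U (fun n => (N <= n)%N).
Lemma Uup {A B : nat -> Prop} : U A -> (forall n, A n -> B n) -> U B.
Proof. exact: Uup0. Qed.
Lemma UI {A B : nat -> Prop} : U A -> U B -> U (fun n => A n /\ B n).
Proof. exact: UI0. Qed.

Lemma UT : U (fun _ => True).
Proof. exact: (@Uup _ (fun _ => True) (Ucof 0) (fun _ _ => I)). Qed.

Lemma Uex A : U A -> exists n, A n.
Proof.
move=> UA; apply: NNPP => hn; apply: U0; apply: (Uup UA) => n An; apply: hn; by exists n.
Qed.

Lemma Unot A : U (fun n => ~ A n) <-> ~ U A.
Proof.
split.
  by move=> h1 h2; apply: U0; apply: (Uup (UI h1 h2)) => n [].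
by move=> h; case: (Uult A).
Qed.

Lemma Uor A B : U (fun n => A n \/ B n) <-> U A \/ U B.
Proof.
split; last by case=> h; apply: (Uup h) => n; auto.
move=> h; apply: NNPP => hn.
have ha : U (fun n => ~ A n) by apply/Unot => ?; apply: hn; left.
have hb : U (fun n => ~ B n) by apply/Unot => ?; apply: hn; right.
by apply: U0; apply: (Uup (UI h (UI ha hb))) => n [[a|b] [na nb]]; [exact: na a | exact: nb b].
Qed.

Lemma Uimp A B : U (fun n => A n -> B n) <-> (U A -> U B).
Proof.
split.
  by move=> h ha; apply: (Uup (UI h ha)) => n [f a]; exact: f a.
move=> h; case: (Uult A) => ha.
  by apply: (Uup (h ha)) => n ? _.
by apply: (Uup ha) => n ? ?.
Qed.

Lemma Ucase (B : nat -> Prop) : U (fun n => B n <-> U B).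
Proof.
case: (classic (U B)) => h.
  by apply: (Uup h) => n; tauto.
by apply: (Uup (proj2 (Unot B) h)) => n; tauto.
Qed.

Lemma Ufin (T : eqType) (s : seq T) (B : T -> nat -> Prop) :
  (forall t, t \in s -> U (B t)) -> U (fun n => forall t, t \in s -> B t n).
Proof.
elim: s => [|x s IH] h.
  by apply: (Uup UT) => n _ t.
have hx : U (B x) by apply: h; rewrite inE eqxx.
have hs : U (fun n => forall t, t \in s -> B t n).
  by apply: IH => t ts; apply: h; rewrite inE ts orbT.
apply: (Uup (UI hx hs)) => n [h1 h2] t; rewrite inE => /orP [/eqP -> //|]; exact: h2.
Qed.

Definition X := forall n, dom (M n).
Definition equiv (x y : X) := U (fun n => x n = y n).

Lemma equiv_refl x : equiv x x.
Proof. by apply: (Uup UT). Qed.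
Lemma equiv_sym x y : equiv x y -> equiv y x.
Proof. by move=> h; apply: (Uup h) => n ->. Qed.
Lemma equiv_trans x y z : equiv x y -> equiv y z -> equiv x z.
Proof. by move=> h1 h2; apply: (Uup (UI h1 h2)) => n [-> ->]. Qed.

Definition dP := {P : X -> Prop | exists x, P = equiv x}.
Definition cls (x : X) : dP := exist _ (equiv x) (ex_intro _ x erefl).
Definition rep (c : dP) : X := proj1_sig (constructive_indefinite_description _ (proj2_sig c)).

Lemma rep_spec c : proj1_sig c = equiv (rep c).
Proof. by rewrite /rep; case: constructive_indefinite_description. Qed.

Lemma cls_rep c : cls (rep c) = c.
Proof.
case: c => P hP; apply: eq_sig_hprop; first by move=> ?; apply: proof_irrelevance.
by symmetry; exact: (rep_spec (exist _ P hP)).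
Qed.

Lemma cls_eq x y : cls x = cls y <-> equiv x y.
Proof.
split.
  move=> h; have : equiv x = equiv y by move: (f_equal (@proj1_sig _ _) h).
  by move=> e; rewrite e; apply: equiv_refl.
move=> h; apply: eq_sig_hprop; first by move=> ?; apply: proof_irrelevance.
apply: functional_extensionality => z; apply: propositional_extensionality; split.
  by apply: equiv_trans; apply: equiv_sym.
by apply: equiv_trans.
Qed.

Lemma rep_cls x : equiv (rep (cls x)) x.
Proof. by apply/cls_eq; rewrite cls_rep. Qed.

Lemma pick_seq : X.
Proof.
move=> n; apply: (proj1_sig (constructive_indefinite_description (fun _ : dom (M n) => True) _)).
by case: (dom_inhabited (M n)) => d; exists d.
Qed.

Lemma choice_seq (P : forall n, dom (M n) -> Prop) :
  exists y : X, forall n, (exists d, P n d) -> P n (y n).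
Proof.
have h : forall n, exists d : dom (M n), (exists d, P n d) -> P n d.
  move=> n; case: (classic (exists d, P n d)) => [[d hd]|hn].
    by exists d.
  by exists (pick_seq n) => /hn.
exists (fun n => proj1_sig (constructive_indefinite_description _ (h n))) => n.
by case: constructive_indefinite_description.
Qed.

Definition PM : model Pi Rs :=
  @Model Pi Rs dP (inhabits (cls pick_seq))
    (fun p c => U (fun n => Pint p (rep c n)))
    (fun r c d => U (fun n => Rint r (rep c n) (rep d n))).

Lemma scons_rep (d : dP) (e : nat -> dP) n :
  (fun i => rep (scons d e i) n) = scons (rep d n) (fun i => rep (e i) n).
Proof. by apply: functional_extensionality => -[|i]. Qed.

Lemma los (phi : formula Pi Rs) : forall e : nat -> dom PM,
  sat e phi <-> U (fun n => sat (M := M n) (fun i => rep (e i) n) phi).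
Proof.
elim: phi => /=.
- by move=> e; split => // /U0.
- move=> i j e; rewrite -{1}(cls_rep (e i)) -{1}(cls_rep (e j)); exact: cls_eq.
- by [].
- by [].
- by move=> a IH e; rewrite IH Unot.
- by move=> a IHa b IHb e; rewrite IHa IHb; split => [[]|h]; [apply: UI|split; apply: (Uup h) => n []].
- by move=> a IHa b IHb e; rewrite IHa IHb Uor.
- by move=> a IHa b IHb e; rewrite IHa IHb Uimp.
- move=> a IH e; split.
    move=> h; apply: NNPP => hn0; have hn := proj2 (Unot _) hn0.
    have [y hy] := choice_seq (fun n d => ~ sat (scons d (fun i => rep (e i) n)) a).
    have := h (cls y); rewrite IH => h1.
    apply: U0; apply: (Uup (UI h1 (UI hn (rep_cls y)))) => n [] + [h2 h3].
    rewrite scons_rep h3; apply: hy; apply: NNPP => h4; apply: h2 => d.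
    by apply: NNPP => h5; apply: h4; exists d.
  move=> h d; rewrite IH; apply: (Uup h) => n h1; rewrite scons_rep; exact: h1.
- move=> a IH e; split.
    by case=> d; rewrite IH; move=> h; apply: (Uup h) => n; rewrite scons_rep => h1; exists (rep d n).
  move=> h.
  have [y hy] := choice_seq (fun n d => sat (scons d (fun i => rep (e i) n)) a).
  exists (cls y); rewrite IH; apply: (Uup (UI h (rep_cls y))) => n [/hy].
  by rewrite scons_rep => + ->.
Qed.

Lemma transfer (x y : X) (Qd : forall n, dom (M n) -> Prop) :
  equiv x y -> U (fun n => Qd n (x n)) -> U (fun n => Qd n (y n)).
Proof. by move=> e h; apply: (Uup (UI e h)) => n [<-]. Qed.

Lemma run_ultra (A : automaton Pi Rs) m : forall x : X,
  U (fun n => run A (M n) m (x n) = run A PM m (cls x)).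
Proof.
elim: m => [|m IH] x /=.
  have hs : U (fun n => forall p, p \in enum Pi ->
      (Pint p (x n) <-> U (fun k => Pint p (rep (cls x) k)))).
    apply: Ufin => p _.
    have e : U (fun k => Pint p (rep (cls x) k)) <-> U (fun k => Pint p (x k)).
      split; [exact: (transfer (fun k z => Pint p z) (rep_cls x)) | exact: (transfer (fun k z => Pint p z) (equiv_sym (rep_cls x)))].
    by apply: (Uup (Ucase (fun k => Pint p (x k)))) => n; tauto.
  apply: (Uup hs) => n h; congr (pi_ A _).
  apply: functional_extensionality => p; apply: propositional_extensionality.
  by apply: h; rewrite mem_enum.
have [L HL] := @run_finite _ _ A m.
set PL := [seq (r, mu A q r) | r <- enum Rs, q <- L].
have inPL : forall (N : model Pi Rs) (v : dom N) r, (r, mu A (run A N m v) r) \in PL.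
  move=> N v r.
  exact: (allpairs_f (fun r q => (r, mu A q r)) (mem_enum _ r) (HL N v)).
have K : forall r msg,
   (exists v : dP, U (fun k => Rint r (rep (cls x) k) (rep v k)) /\ mu A (run A PM m v) r = msg)
   <-> U (fun n => exists v, Rint r (x n) v /\ mu A (run A (M n) m v) r = msg).
  move=> r msg; split.
    case=> c [hR hmu].
    have hR' : U (fun k => Rint r (x k) (rep c k)).
      exact: (transfer (fun k z => Rint r z (rep c k)) (rep_cls x) hR).
    apply: (Uup (UI hR' (IH (rep c)))) => n [h1 h2]; exists (rep c n); split => //.
    by rewrite h2 cls_rep.
  move=> h.
  have [y hy] := choice_seq (fun n v => Rint r (x n) v /\ mu A (run A (M n) m v) r = msg).
  have hU : U (fun n => Rint r (x n) (y n) /\ mu A (run A (M n) m (y n)) r = msg).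
    by apply: (Uup h) => n hn; apply: hy.
  exists (cls y); split.
    apply: (Uup (UI hU (UI (rep_cls x) (rep_cls y)))) => n [[h1 _] [e1 e2]].
    by rewrite e1 e2.
  have [n [[_ h2] h3]] := Uex (UI hU (IH y)).
  by rewrite -h3.
have S : U (fun n => forall rp, rp \in PL ->
   ((exists v, Rint rp.1 (x n) v /\ mu A (run A (M n) m v) rp.1 = rp.2) <->
    (exists v : dP, U (fun k => Rint rp.1 (rep (cls x) k) (rep v k)) /\ mu A (run A PM m v) rp.1 = rp.2))).
  apply: Ufin => rp _.
  apply: (Uup (Ucase (fun n => exists v, Rint rp.1 (x n) v /\ mu A (run A (M n) m v) rp.1 = rp.2))) => n.
  have := K rp.1 rp.2; tauto.
apply: (Uup (UI S (IH x))) => n [hS hrun]; rewrite hrun; congr (delta A _ _).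
apply: functional_extensionality => r; apply: functional_extensionality => msg.
apply: propositional_extensionality.
case: (boolP ((r, msg) \in PL)) => hin; first exact: (hS _ hin).
split.
  by case=> v [_ hv]; move: hin; rewrite -hv inPL.
by case=> v [_ hv]; move: hin; rewrite -hv inPL.
Qed.

Lemma ultra_main (A : automaton Pi Rs) (H : pclass Pi Rs) (T : formula Pi Rs -> Prop)
  (hH : forall (Mo : model Pi Rs) (w : dom Mo), H Mo w <-> models_theory Mo T)
  (ws : X) (hw : forall n, H (M n) (ws n)) (conv : converges_in A H) :
  exists j n0, (n0 <= j)%N /\ (accepts_in A (M j) (ws j) n0 \/ rejects_in A (M j) (ws j) n0).
Proof.
have hPM : H PM (cls ws).
  apply/hH => phi hphi e; apply/los.
  apply: (Uup UT) => n _; exact: ((hH (M n) (ws n)).1 (hw n) phi hphi).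
have [n0 hdec] := conv _ _ hPM.
have hr : U (fun j => forall k, k \in iota 0 n0.+1 -> run A (M j) k (ws j) = run A PM k (cls ws)).
  by apply: Ufin => k _; apply: run_ultra.
have [j [hj1 hj2]] := Uex (UI hr (Ucof n0)).
exists j, n0; split => //.
have hk : forall k, (k <= n0)%N -> run A (M j) k (ws j) = run A PM k (cls ws).
  by move=> k hk; apply: hj1; rewrite mem_iota add0n ltnS hk.
case: hdec => [[hF hG]|[hG hF]]; [left|right]; split.
- by rewrite hk.
- by move=> m hm; rewrite hk ?(ltnW hm) //; apply: hG.
- by rewrite hk.
- by move=> m hm; rewrite hk ?(ltnW hm) //; apply: hF.
Qed.

End Ultra.

From mathcomp Require Import boolp classical_sets filter.

Section UltraEx.
Local Open Scope classical_set_scope.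
Lemma ultra_exists : exists U : (nat -> Prop) -> Prop,
  (forall A B : nat -> Prop, (forall n, A n -> B n) -> U A -> U B) /\
  (forall A B : nat -> Prop, U A -> U B -> U (fun n => A n /\ B n)) /\
  ~ U (fun _ => False) /\
  (forall A : nat -> Prop, U A \/ U (fun n => ~ A n)) /\
  (forall N, U (fun n => (N <= n)%N)).
Proof.
have [G [GU sFG]] := @ultraFilterLemma nat eventually _.
exists G; split; [|split; [|split; [|split]]].
- by move=> A B AB GA; exact: (filterS AB GA).
- by move=> A B GA GB; exact: (filterI GA GB).
- by move=> /filter_ex [].
- by move=> A; apply: in_ultra_setVsetC.
- by move=> N; apply: sFG; exists N.
Qed.
End UltraEx.

Theorem theorem4p3 (Pi Rs : finType) (H : pclass Pi Rs) (A : automaton Pi Rs) :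
  FO_definable H -> converges_in A H -> local_algorithm_in A H.
Proof.
move=> [T [hT hH]] conv; apply: NNPP => hnl.
have hN : forall N, exists p : {Mo : model Pi Rs & dom Mo},
    H (projT1 p) (projT2 p) /\ forall m, (m <= N)%N ->
      ~ (accepts_in A (projT1 p) (projT2 p) m \/ rejects_in A (projT1 p) (projT2 p) m).
  move=> N; apply: NNPP => h; apply: hnl; exists N => Mo w hw; apply: NNPP => h2.
  apply: h; exists (existT _ Mo w); split => // m hm hacc; apply: h2; exists m; split => //.
pose p n := proj1_sig (ClassicalEpsilon.constructive_indefinite_description _ (hN n)).
have hp : forall n, H (projT1 (p n)) (projT2 (p n)) /\ forall m, (m <= n)%N ->
      ~ (accepts_in A (projT1 (p n)) (projT2 (p n)) m \/ rejects_in A (projT1 (p n)) (projT2 (p n)) m).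
  by move=> n; rewrite /p; case: ClassicalEpsilon.constructive_indefinite_description.
clearbody p.
have [U [Uup [UI [U0 [Uult Ucof]]]]] := ultra_exists.
have [j [n0 [hj hd]]] := @ultra_main Pi Rs (fun n => projT1 (p n)) U (fun A0 B0 h1 h2 => Uup A0 B0 h2 h1) UI U0 Uult Ucof
  A H T hH (fun n => projT2 (p n)) (fun n => (hp n).1) conv.
exact: ((hp j).2 n0 hj hd).
Qed.
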